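(* Let $r\le s$, $M$ the space of complex $r\times s$ matrices, $D_k\subset M$ the variety of matrices of rank at most $k$ ($0\le k<r$), and $p\ge0$ an integer. The contact locus $\mathrm{Cont}^{\ge p}(D_k)\subset M_\infty$ is invariant under $G_\infty$, and an orbit $O_\lambda$ ($\lambda$ a pre-partition of length at most $r$) is contained in $\mathrm{Cont}^{\ge p}(D_k)$ if and only if $\lambda_{r-k}+\dots+\lambda_r\ge p$.
   Context: $D_k$ is defined by the ideal $I_{D_k}$ of $(k+1)\times(k+1)$ minors. The $\mathbb{C}$-points of the arc space $M_\infty$ are $r\times s$ matrices over $\mathbb{C}[[t]]$; $G=GL_r\times GL_s$ acts on $M$ by $(g,h)\cdot A=gAh^{-1}$, and $G_\infty$ acts on $M_\infty$. For $\gamma\in M_\infty$ (viewed as $\mathrm{Spec}\,K[[t]]\to M$), $\mathrm{ord}_\gamma(I_{D_k})=e$ where $\gamma^*I_{D_k}=(t^e)$, $e\in\mathbb N\cup\{\infty\}$; $\mathrm{Cont}^{\ge p}(D_k)=\{\gamma:\mathrm{ord}_\gamma(I_{D_k})\ge p\}$. A pre-partition of length at most $r$ is $\lambda_1\ge\dots\ge\lambda_r\ge0$ in $\mathbb N\cup\{\infty\}$ (with $\infty>n$, $\infty+n=\infty$); $\delta_\lambda$ is the $r\times s$ matrix with first $s-r$ columns zero and last $r$ columns $\mathrm{diag}(t^{\lambda_1},\dots,t^{\lambda_r})$ ($t^\infty=0$); $O_\lambda=G_\infty\cdot\delta_\lambda$. *)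

(* Defs.v *)
From HB Require Import structures.
From mathcomp Require Import all_boot all_order all_algebra.
From mathcomp Require Import boolp.
From mathcomp Require Import complex.
From mathcomp Require Import Rstruct.

Set Implicit Arguments.
Unset Strict Implicit.
Unset Printing Implicit Defensive.

Import Order.TTheory GRing.Theory Num.Theory.
Local Open Scope ring_scope.

Definition Cplx : fieldType := (Rdefinitions.R)[i].

Record fps (K : fieldType) := FPS { fpscoef : nat -> K }.
Arguments FPS {K}.

Section FPS.
Variable K : fieldType.
Local Notation F := (fps K).

HB.instance Definition _ := gen_eqMixin F.
HB.instance Definition _ := gen_choiceMixin F.

Lemma fpsP (f g : F) : (forall n, fpscoef f n = fpscoef g n) -> f = g.
Proof. by case: f; case: g => g f /= H; congr FPS; apply: funext. Qed.

Definition fps0 : F := FPS (fun _ => 0).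
Definition fpsopp (f : F) : F := FPS (fun n => - fpscoef f n).
Definition fpsadd (f g : F) : F := FPS (fun n => fpscoef f n + fpscoef g n).

Lemma fpsaddA : associative fpsadd.
Proof. by move=> f g h; apply: fpsP => n /=; rewrite addrA. Qed.
Lemma fpsaddC : commutative fpsadd.
Proof. by move=> f g; apply: fpsP => n /=; rewrite addrC. Qed.
Lemma fpsadd0 : left_id fps0 fpsadd.
Proof. by move=> f; apply: fpsP => n /=; rewrite add0r. Qed.
Lemma fpsaddN : left_inverse fps0 fpsopp fpsadd.
Proof. by move=> f; apply: fpsP => n /=; rewrite addNr. Qed.

HB.instance Definition _ := GRing.isZmodule.Build F fpsaddA fpsaddC fpsadd0 fpsaddN.

Definition fpstr (f : F) (n : nat) : {poly K} := \poly_(i < n.+1) fpscoef f i.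

(** Cauchy product: the n-th coefficient of f*g is that of the product
    of the degree-n truncations *)
Definition fps1 : F := FPS (fun n => (n == 0)%:R).
Definition fpsmul (f g : F) : F := FPS (fun n => (fpstr f n * fpstr g n)`_n).

Lemma coefM_agree (p p' q q' : {poly K}) n :
  (forall i, (i <= n)%N -> p`_i = p'`_i) ->
  (forall i, (i <= n)%N -> q`_i = q'`_i) -> (p * q)`_n = (p' * q')`_n.
Proof.
move=> Hp Hq; rewrite !coefM; apply: eq_bigr => j _.
by rewrite Hp ?Hq ?leq_subr // -ltnS.
Qed.

Lemma fpstr_coef (f : F) n i : (i <= n)%N -> (fpstr f n)`_i = fpscoef f i.
Proof. by move=> H; rewrite coef_poly ltnS H. Qed.

Lemma fpstr_mul (f g : F) n i : (i <= n)%N ->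
  (fpstr (fpsmul f g) n)`_i = (fpstr f n * fpstr g n)`_i.
Proof.
move=> H; rewrite fpstr_coef //=; apply: coefM_agree => j Hj;
by rewrite !fpstr_coef // (leq_trans Hj H).
Qed.

Lemma fpsmulA : associative fpsmul.
Proof.
move=> f g h; apply: fpsP => n /=.
rewrite (@coefM_agree _ (fpstr f n) _ (fpstr g n * fpstr h n)) //;
  last by move=> i Hi; rewrite fpstr_mul.
rewrite mulrA; apply: coefM_agree => // i Hi.
by rewrite fpstr_mul.
Qed.

Lemma fpsmulC : commutative fpsmul.
Proof. by move=> f g; apply: fpsP => n /=; rewrite mulrC. Qed.

Lemma fpsmul1 : left_id fps1 fpsmul.
Proof.
move=> f; apply: fpsP => n /=.
rewrite (@coefM_agree _ 1 _ (fpstr f n)) //; last first.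
  by move=> i Hi; rewrite fpstr_coef // coef1.
by rewrite mul1r fpstr_coef.
Qed.

Lemma fpstrD (f g : F) n : fpstr (fpsadd f g) n = fpstr f n + fpstr g n.
Proof. by apply/polyP => i; rewrite coefD !coef_poly; case: ifP; rewrite ?addr0. Qed.

Lemma fpsmulDl : left_distributive fpsmul fpsadd.
Proof. by move=> f g h; apply: fpsP => n /=; rewrite fpstrD mulrDl coefD. Qed.

Lemma fps1_neq0 : fps1 != fps0.
Proof.
apply/eqP => /(congr1 (fun x => fpscoef x 0)) /= /eqP.
by rewrite oner_eq0.
Qed.

HB.instance Definition _ :=
  GRing.Zmodule_isComNzRing.Build F fpsmulA fpsmulC fpsmul1 fpsmulDl fps1_neq0.

Definition fpsunit : {pred F} := [pred f | `[< exists g, g * f = 1 >]].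
Definition fpsinv (f : F) : F :=
  match pselect (exists g, g * f = 1) with
  | left ex => proj1_sig (cid ex)
  | right _ => f
  end.

Lemma fpsmulV : {in fpsunit, left_inverse 1 fpsinv *%R}.
Proof.
move=> f /asboolP Hf; rewrite /fpsinv; case: pselect => // ex.
by case: (cid ex).
Qed.

Lemma fpsunitP : forall x y : F, y * x = 1 -> fpsunit x.
Proof. by move=> x y H; apply/asboolP; exists y. Qed.

Lemma fpsinv_out : {in [predC fpsunit], fpsinv =1 id}.
Proof.
move=> f; rewrite inE /= => /asboolPn Hf; rewrite /fpsinv.
by case: pselect.
Qed.

HB.instance Definition _ :=
  GRing.ComNzRing_hasMulInverse.Build F fpsmulV fpsunitP fpsinv_out.

Definition fpsT : F := FPS (fun n => (n == 1)%:R).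

End FPS.

(** * Arcs in the space M of r x s complex matrices: r x s matrices over C[[t]] *)
Notation Ct := (fps Cplx).
Definition arc (r s : nat) := 'M[Ct]_(r, s).

(** The G_infty = GL_r(C[[t]]) x GL_s(C[[t]]) action (g,h).A = g A h^{-1}. *)
Definition Gact (r s : nat) (g : 'M[Ct]_r) (h : 'M[Ct]_s) (A : 'M[Ct]_(r, s)) :
  'M[Ct]_(r, s) := g *m A *m invmx h.

Definition minor_of (r s k : nat) (A : 'M[Ct]_(r, s))
  (rw : 'I_k.+1 -> 'I_r) (cl : 'I_k.+1 -> 'I_s) : Ct :=
  \det (mxsub rw cl A).

Definition incr_map (n m : nat) (f : 'I_n -> 'I_m) : Prop :=
  forall i j : 'I_n, (i < j)%N -> (f i < f j)%N.

(** gamma^* I_{D_k}: the ideal of C[[t]] generated by the (k+1)-minors of gamma *)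
Definition pullback_ideal (r s k : nat) (A : 'M[Ct]_(r, s)) (x : Ct) : Prop :=
  exists (n : nat) (c : 'I_n -> Ct) (rw : 'I_n -> 'I_k.+1 -> 'I_r)
         (cl : 'I_n -> 'I_k.+1 -> 'I_s),
    (forall i, incr_map (rw i)) /\ (forall i, incr_map (cl i)) /\
    x = \sum_(i < n) c i * minor_of A (rw i) (cl i).

Definition tpow_ideal (p : nat) (x : Ct) : Prop := exists u : Ct, x = fpsT _ ^+ p * u.

(** ord_gamma(I_{D_k}) >= p, i.e. gamma^* I_{D_k} = (t^e) with e >= p,
    i.e. gamma^* I_{D_k} is contained in (t^p) (e = infinity when the ideal is 0). *)
Definition Cont_ge (r s k p : nat) (A : 'M[Ct]_(r, s)) : Prop :=
  forall x, pullback_ideal k A x -> tpow_ideal p x.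

(** * Extended naturals N u {infinity}: None = infinity *)
Definition enat := option nat.
Definition ele (a b : enat) : bool :=
  match a, b with
  | _, None => true
  | None, Some _ => false
  | Some m, Some n => (m <= n)%N
  end.
Definition eadd (a b : enat) : enat :=
  match a, b with
  | Some m, Some n => Some (m + n)%N
  | _, _ => None
  end.

(** pre-partitions of length at most r: lambda_1 >= ... >= lambda_r >= 0,
    indexed here by 'I_r (lambda_{i+1} is lam i). *)
Definition prepartition (r : nat) (lam : 'I_r -> enat) : Prop :=
  forall i j : 'I_r, (i <= j)%N -> ele (lam j) (lam i).

(** t^lambda with t^infinity = 0 *)
Definition tpowe (a : enat) : Ct :=
  match a with Some n => fpsT _ ^+ n | None => 0 end.

Definition delta_lam (r s : nat) (lam : 'I_r -> enat) : 'M[Ct]_(r, s) :=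
  \matrix_(i < r, j < s) if (j : nat) == (s - r + i)%N then tpowe (lam i) else 0.

Definition in_Olam (r s : nat) (lam : 'I_r -> enat) (B : 'M[Ct]_(r, s)) : Prop :=
  exists (g : 'M[Ct]_r) (h : 'M[Ct]_s),
    g \in unitmx /\ h \in unitmx /\ B = Gact g h (delta_lam s lam).

(** lambda_{r-k} + ... + lambda_r  (1-based), i.e. 0-based indices i >= r-k-1 *)
Definition tail_sum (r k : nat) (lam : 'I_r -> enat) : enat :=
  \big[eadd/Some 0%N]_(i < r | (r - k.+1 <= i)%N) lam i.

(* Main.v *)
Require Import Defs.
From mathcomp Require Import all_boot all_order all_algebra all_fingroup.
From mathcomp Require Import boolp complex Rstruct.
From mathcomp Require Import zify.
Set Implicit Arguments. Unset Strict Implicit. Unset Printing Implicit Defensive.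
Import Order.TTheory GRing.Theory Num.Theory.
Local Open Scope ring_scope.

Lemma sort_exists q m (f : 'I_q -> 'I_m) : injective f ->
  exists s : 'S_q, incr_map (fun x => f (s x)).
Proof.
move=> injf.
pose W (s : 'S_q) := (\sum_(i < q) i * f (s i))%N.
case: (@arg_maxnP _ 1%g xpredT W isT) => s _ smax.
exists s => i j ij.
have : f (s i) != f (s j).
  apply/eqP => /injf /perm_inj eij; move: ij; rewrite eij ltnn //.
rewrite neq_ltn => /orP [//|ba]; exfalso.
pose s' : 'S_q := (tperm i j * s)%g.
have := smax s' isT; rewrite /geq.
have ineqj : i != j by rewrite -val_eqE /= ltn_eqF.
set R := (\sum_(l < q | (l != i) && (l != j)) l * f (s l))%N.
have e1 : W s = (i * f (s i) + (j * f (s j) + R))%N.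
  by rewrite /W (bigD1 i) // (bigD1 j) //= eq_sym.
have e2 : W s' = (i * f (s j) + (j * f (s i) + R))%N.
  rewrite /W (bigD1 i) // (bigD1 j) //=; last by rewrite eq_sym.
  rewrite !permM tpermL tpermR; congr (_ + (_ + _))%N.
  by apply: eq_bigr => l /andP [li lj]; rewrite permM tpermD // eq_sym.
rewrite e1 e2.
move: ba ij; set a := nat_of_ord (f (s i)); set b := nat_of_ord (f (s j)).
move=> ba ij; move: (nat_of_ord i) (nat_of_ord j) ij => x y xy.
have : (0 < (y - x) * (a - b))%N by rewrite muln_gt0 !subn_gt0 xy ba.
nia.
Qed.

Section Ideal.
Variable R : comNzRingType.
Variable I : R -> Prop.
Hypothesis I0 : I 0.
Hypothesis ID : forall x y, I x -> I y -> I (x + y).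
Hypothesis IM : forall c y, I y -> I (c * y).

Lemma I_sum (J : finType) (F : J -> R) : (forall j, I (F j)) -> I (\sum_j F j).
Proof.
move=> H; elim/big_ind: _ => //.
Qed.

Lemma minors_all q m n (A : 'M[R]_(m, n)) :
  (forall (rw : 'I_q -> 'I_m) (cl : 'I_q -> 'I_n), incr_map rw -> incr_map cl ->
     I (\det (mxsub rw cl A))) ->
  forall (f : 'I_q -> 'I_m) (g : 'I_q -> 'I_n), I (\det (mxsub f g A)).
Proof.
move=> H f g.
have [injf|] := boolP (injectiveb f); last first.
  case/injectivePn => x [y xy e].
  rewrite (determinant_alternate xy) // => c; by rewrite !mxE e.
have [injg|] := boolP (injectiveb g); last first.
  case/injectivePn => x [y xy e].
  rewrite -det_tr (determinant_alternate xy) // => c; by rewrite !mxE e.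
have [s incs] := sort_exists (injectiveP _ injf).
have [t inct] := sort_exists (injectiveP _ injg).
set N := mxsub (fun x => f (s x)) (fun x => g (t x)) A.
have -> : mxsub f g A = row_perm s^-1 (col_perm t^-1 N).
  by apply/matrixP => i j; rewrite !mxE !permKV.
rewrite row_permE col_permE invgK !det_mulmx ?mulrA mulrAC; apply: IM; exact: H.
Qed.

Lemma det_mul_expand q m (X : 'M[R]_(q, m)) (B : 'M[R]_(m, q)) :
  \det (X *m B) = \sum_(f : {ffun 'I_q -> 'I_m})
     (\prod_i X i (f i)) * \det (rowsub f B).
Proof.
rewrite /determinant.
under eq_bigr => s _ do under eq_bigr => i _ do rewrite mxE.
under eq_bigr => s _ do rewrite bigA_distr_bigA big_distrr.
rewrite exchange_big /=; apply: eq_bigr => f _.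
rewrite big_distrr /=; apply: eq_bigr => s _.
rewrite mulrCA; congr (_ * _); rewrite -big_split /=.
by apply: eq_bigr => i _; rewrite mxE.
Qed.

Lemma det_mul_I q m (X : 'M[R]_(q, m)) (B : 'M[R]_(m, q)) :
  (forall f : 'I_q -> 'I_m, I (\det (rowsub f B))) -> I (\det (X *m B)).
Proof.
move=> H; rewrite det_mul_expand; apply: I_sum => f; apply: IM; exact: H.
Qed.

Lemma minors_mul q m1 m n n1 (P : 'M[R]_(m1, m)) (A : 'M[R]_(m, n)) (Q : 'M[R]_(n, n1)) :
  (forall (rw : 'I_q -> 'I_m) (cl : 'I_q -> 'I_n), incr_map rw -> incr_map cl ->
     I (\det (mxsub rw cl A))) ->
  forall (f : 'I_q -> 'I_m1) (g : 'I_q -> 'I_n1), I (\det (mxsub f g (P *m A *m Q))).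
Proof.
move=> H f g; rewrite -mulmxA mxsub_mul; apply: det_mul_I => phi.
rewrite -mxsubrc mxsub_mul -det_tr trmx_mul; apply: det_mul_I => psi.
have -> : rowsub psi (rowsub phi A)^T = (mxsub phi psi A)^T.
  by apply/matrixP => i j; rewrite !mxE.
by rewrite det_tr; apply: minors_all.
Qed.

End Ideal.
Section Coef.
Variable K : fieldType.

Lemma coef_fps1 n : fpscoef (1 : fps K) n = (n == 0)%:R.
Proof. by []. Qed.

Lemma coefT_mul (u : fps K) n :
  fpscoef (fpsT K * u) n = if n is m.+1 then fpscoef u m else 0.
Proof.
have -> : fpscoef (fpsT K * u) n = (fpstr (fpsT K) n * fpstr u n)`_n by [].
rewrite (@coefM_agree _ _ 'X _ (fpstr u n)) //; last first.
  by move=> i Hi; rewrite fpstr_coef // coefX.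
rewrite coefXM; case: n => //= m.
by rewrite fpstr_coef.
Qed.

Lemma coefTp_mul p (u : fps K) n :
  fpscoef (fpsT K ^+ p * u) n = if (n < p)%N then 0 else fpscoef u (n - p).
Proof.
elim: p n => [|p IH] n; first by rewrite expr0 mul1r subn0.
rewrite exprS -mulrA coefT_mul; case: n => [|n] //.
Qed.

End Coef.

Lemma tpow_le p n : tpow_ideal p (fpsT Cplx ^+ n) -> (p <= n)%N.
Proof.
case=> u e; rewrite leqNgt; apply/negP => np.
have h1 : fpscoef (fpsT Cplx ^+ n) n = 1.
  by rewrite -[fpsT Cplx ^+ n]mulr1 coefTp_mul ltnn subnn coef_fps1.
have h2 : fpscoef (fpsT Cplx ^+ p * u) n = 0 by rewrite coefTp_mul np.
by move: h1; rewrite e h2 => /eqP; rewrite eq_sym oner_eq0.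
Qed.

Lemma tpow0 p : tpow_ideal p (0 : Ct).
Proof. by exists 0; rewrite mulr0. Qed.
Lemma tpowD p (x y : Ct) : tpow_ideal p x -> tpow_ideal p y -> tpow_ideal p (x + y).
Proof. by case=> u -> [v ->]; exists (u + v); rewrite mulrDr. Qed.
Lemma tpowM p (c y : Ct) : tpow_ideal p y -> tpow_ideal p (c * y).
Proof. by case=> u ->; exists (c * u); rewrite mulrCA. Qed.

Lemma cont_minors r s k p (A : 'M[Ct]_(r, s)) :
  Cont_ge k p A <-> (forall (rw : 'I_k.+1 -> 'I_r) (cl : 'I_k.+1 -> 'I_s), incr_map rw -> incr_map cl ->
      tpow_ideal p (\det (mxsub rw cl A))).
Proof.
split=> H.
  move=> rw cl ir ic; apply: H.
  exists 1%N, (fun _ => 1), (fun _ => rw), (fun _ => cl); split => //; split => //.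
  by rewrite big_ord1 mul1r.
move=> x [n [c [rw [cl [ir [ic ->]]]]]].
apply: (I_sum (tpow0 p) (@tpowD p)) => i; apply: tpowM; exact: H.
Qed.

Lemma part1 r s k p (g : 'M[Ct]_r) (h : 'M[Ct]_s) (A : 'M[Ct]_(r, s)) :
  Cont_ge k p A -> Cont_ge k p (Gact g h A).
Proof.
move/cont_minors => H; apply/cont_minors => rw cl _ _.
apply: (minors_mul (tpow0 p) (@tpowD p) (@tpowM p)) => rw' cl' ir ic; exact: H.
Qed.
Lemma tpowe_add a b : tpowe (eadd a b) = tpowe a * tpowe b.
Proof.
by case: a => [m|]; case: b => [n|] //=; rewrite ?exprD ?mul0r ?mulr0.
Qed.

Definition tdiv (a b : enat) : Ct :=
  match a, b with Some m, Some n => fpsT _ ^+ (n - m) | _, _ => 0 end.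

Lemma tpowe_div a b : ele a b -> tpowe b = tpowe a * tdiv a b.
Proof.
case: a => [m|]; case: b => [n|] //=; rewrite ?mulr0 // => mn.
by rewrite -exprD subnKC.
Qed.

Lemma tpowe_ideal p e : ele (Some p) e <-> tpow_ideal p (tpowe e).
Proof.
split.
  case: e => [n|] /= H; last exact: tpow0.
  by exists (fpsT _ ^+ (n - p)); rewrite -exprD subnKC.
by case: e => [n|] //= /tpow_le.
Qed.

Lemma prod_tail r m q (G : 'I_r -> Ct) (e : (m + q = r)%N)
  (tl : 'I_q -> 'I_r) (htl : forall j, nat_of_ord (tl j) = (m + j)%N) :
  \prod_(i < r | (m <= i)%N) G i = \prod_(j < q) G (tl j).
Proof.
pose G' (i : nat) := odflt 1 (omap G (insub i)).
have G'E (o : 'I_r) : G' o = G o by rewrite /G' valK.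
rewrite (eq_bigr (fun i : 'I_r => G' i)) //.
transitivity (\prod_(m <= i < r) G' i); first by rewrite big_geq_mkord.
rewrite -{1}(add0n m) big_addn.
have -> : (r - m = q)%N by lia.
rewrite big_mkord; apply: eq_bigr => j _.
by rewrite -G'E htl addnC.
Qed.

Lemma incr_bound q r (rw : 'I_q -> 'I_r) : incr_map rw ->
  forall j : 'I_q, (rw j + (q - j) <= r)%N.
Proof.
move=> ir.
suff H : forall d (j : 'I_q), (q - j)%N = d.+1 -> (rw j + d.+1 <= r)%N.
  move=> j; have := ltn_ord j; case E: (q - j)%N => [|d]; first lia.
  by move=> _; apply: H.
elim=> [|d IH] j e; first by rewrite addn1 ltn_ord.
have hj : (j.+1 < q)%N by lia.
have := IH (Ordinal hj) ltac:(rewrite /=; lia).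
have := ir j (Ordinal hj) (ltnSn _).
lia.
Qed.

Definition Emx r s : 'M[Ct]_(r, s) :=
  \matrix_(i < r, j < s) ((j : nat) == (s - r + i)%N)%:R.

Lemma delta_minor r s k (lam : 'I_r -> enat) (rw : 'I_k.+1 -> 'I_r) (cl : 'I_k.+1 -> 'I_s) :
  \det (mxsub rw cl (delta_lam s lam)) =
  (\prod_j tpowe (lam (rw j))) * \det (mxsub rw cl (Emx r s)).
Proof.
have -> : mxsub rw cl (delta_lam s lam) =
   diag_mx (\row_j tpowe (lam (rw j))) *m mxsub rw cl (Emx r s).
  apply/matrixP => i j; rewrite mul_diag_mx !mxE.
  by case: ifP => _; rewrite ?mulr1 ?mulr0.
by rewrite det_mulmx det_diag; congr (_ * _); apply: eq_bigr => j _; rewrite mxE.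
Qed.
Theorem proposition3p3 (r s k p : nat) (hrs : (r <= s)%N) (hkr : (k < r)%N) :
  (forall (g : 'M[Ct]_r) (h : 'M[Ct]_s) (A : 'M[Ct]_(r, s)),
      g \in unitmx -> h \in unitmx ->
      Cont_ge k p A -> Cont_ge k p (Gact g h A))
  /\
  (forall lam : 'I_r -> enat, prepartition lam ->
      ((forall B : 'M[Ct]_(r, s), in_Olam lam B -> Cont_ge k p B)
       <-> ele (Some p) (tail_sum k lam))).
Proof.
split; first by move=> g h A _ _; apply: part1.
move=> lam plam.
have tlP : forall j : 'I_k.+1, (r - k.+1 + j < r)%N by move=> j; have := ltn_ord j; lia.
pose tl j := Ordinal (tlP j).
have tailE : tpowe (tail_sum k lam) = \prod_(j < k.+1) tpowe (lam (tl j)).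
  rewrite /tail_sum (big_morph tpowe tpowe_add (_ : tpowe (Some 0%N) = 1)); last first.
    by rewrite /= expr0.
  apply: prod_tail => //; lia.
split.
- move=> H; apply/tpowe_ideal; rewrite tailE.
  have tl2P : forall j : 'I_k.+1, (s - k.+1 + j < s)%N by move=> j; have := ltn_ord j; lia.
  pose tl2 j := Ordinal (tl2P j).
  have Hd : Cont_ge k p (delta_lam s lam).
    apply: H; exists 1%:M, 1%:M; split; first exact: unitmx1.
    split; first exact: unitmx1.
    by rewrite /Gact invmx1 mul1mx mulmx1.
  have i1 : incr_map tl by move=> i j /= ij; lia.
  have i2 : incr_map tl2 by move=> i j /= ij; lia.
  move/cont_minors: Hd => /(_ tl tl2 i1 i2); rewrite delta_minor.
  have -> : mxsub tl tl2 (Emx r s) = 1%:M.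
    apply/matrixP => i j; rewrite !mxE /=.
    have -> : ((s - k.+1 + j)%N == (s - r + (r - k.+1 + i))%N) = (i == j).
      apply/eqP/eqP => [E|->]; [apply: val_inj => /=; lia | lia].
    by [].
  by rewrite det1 mulr1.
- move=> hle B [g [h [_ [_ ->]]]]; apply: part1.
  apply/cont_minors => rw cl ir _.
  rewrite delta_minor mulrC; apply: tpowM.
  rewrite (eq_bigr (fun j => tpowe (lam (tl j)) * tdiv (lam (tl j)) (lam (rw j)))); last first.
    move=> j _; apply: tpowe_div; apply: plam => /=.
    have := incr_bound ir j; have := ltn_ord j; lia.
  rewrite big_split /= mulrC; apply: tpowM; rewrite -tailE; exact/tpowe_ideal.
Qed.
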